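(* Let $\mathcal H$ be a finite-dimensional complex Hilbert space, $A,B$ Hermitian operators on $\mathcal H$, $\rho$ a density operator on $\mathcal H$ and $|\phi\rangle$ a unit vector. Set $W_{AB}=\langle\phi|B\rho A|\phi\rangle$. Then $$\big(\langle\Delta A\rangle^{\phi}_{\rho}\big)^2\big(\langle\Delta B\rangle^{\phi}_{\rho}\big)^2\ge\Big[\tfrac{1}{2i}\operatorname{Tr}(\rho[A,B])-\operatorname{Im}W_{AB}\Big]^2+\Big[\tfrac12\operatorname{Tr}(\rho\{A,B\})-\operatorname{Re}W_{AB}\Big]^2,$$ and in particular $\big(\langle\Delta A\rangle^{\phi}_{\rho}\big)^2\big(\langle\Delta B\rangle^{\phi}_{\rho}\big)^2\ge\big[\tfrac{1}{2i}\operatorname{Tr}(\rho[A,B])-\operatorname{Im}W_{AB}\big]^2$. The same lower bound holds with $\langle\Delta A\rangle^{\phi}_{\rho},\langle\Delta B\rangle^{\phi}_{\rho}$ replaced by $\langle\Delta A_w\rangle^{\phi}_{\rho},\langle\Delta B_w\rangle^{\phi}_{\rho}$ whenever $\langle\phi|\rho|\phi\rangle>0$.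
   Context: For a density operator $\rho$, Hermitian $X$ and unit vector $|\phi\rangle$: $\big(\langle\Delta X\rangle^{\phi}_{\rho}\big)^2:=\operatorname{Tr}(X^2\rho)-\langle\phi|X\rho X|\phi\rangle$; if $\langle\phi|\rho|\phi\rangle>0$, $\big(\langle\Delta X_w\rangle^{\phi}_{\rho}\big)^2:=\operatorname{Tr}(X^2\rho)-\frac{|\langle\phi|X\rho|\phi\rangle|^2}{\langle\phi|\rho|\phi\rangle}$. $[A,B]=AB-BA$, $\{A,B\}=AB+BA$. *)

(* Defs.v *)
From HB Require Import structures.
From mathcomp Require Import all_boot all_order all_algebra.
From mathcomp Require Import complex.
From mathcomp Require Import reals.
Set Implicit Arguments. Unset Strict Implicit. Unset Printing Implicit Defensive.
Import Order.TTheory GRing.Theory Num.Theory.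
Local Open Scope ring_scope.

Definition adjmx (C : numClosedFieldType) m n (M : 'M[C]_(m, n)) : 'M[C]_(n, m) :=
  (map_mx Num.conj M)^T.

Definition braket (C : numClosedFieldType) n (u : 'cV[C]_n) (M : 'M[C]_n) (v : 'cV[C]_n) : C :=
  (adjmx u *m M *m v) 0 0.

Definition is_hermitian (C : numClosedFieldType) n (M : 'M[C]_n) : Prop :=
  adjmx M = M.

Definition psd (C : numClosedFieldType) n (M : 'M[C]_n) : Prop :=
  is_hermitian M /\ forall v : 'cV[C]_n, 0 <= braket v M v.

Definition density (C : numClosedFieldType) n (rho : 'M[C]_n) : Prop :=
  psd rho /\ \tr rho = 1.

Definition unit_vector (C : numClosedFieldType) n (phi : 'cV[C]_n) : Prop :=
  braket phi 1%:M phi = 1.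

Definition commmx (C : numClosedFieldType) n (A B : 'M[C]_n) := A *m B - B *m A.
Definition acommmx (C : numClosedFieldType) n (A B : 'M[C]_n) := A *m B + B *m A.

(* (<Delta X>^phi_rho)^2 := Tr(X^2 rho) - <phi| X rho X |phi> *)
Definition var_phi (C : numClosedFieldType) n (X rho : 'M[C]_n) (phi : 'cV[C]_n) : C :=
  \tr (X *m X *m rho) - braket phi (X *m rho *m X) phi.

(* (<Delta X_w>^phi_rho)^2 := Tr(X^2 rho) - |<phi|X rho|phi>|^2 / <phi|rho|phi> *)
Definition var_w (C : numClosedFieldType) n (X rho : 'M[C]_n) (phi : 'cV[C]_n) : C :=
  \tr (X *m X *m rho) - `|braket phi (X *m rho) phi| ^+ 2 / braket phi rho phi.

(* Main.v *)
Require Import Defs.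
From HB Require Import structures.
From mathcomp Require Import all_boot all_order all_algebra.
From mathcomp Require Import complex.
From mathcomp Require Import reals.
From mathcomp Require Import ring lra.
Import Order.TTheory GRing.Theory Num.Theory.
Local Open Scope ring_scope.

Lemma cs_real (R : realType) (a b N : R) : 0 <= N -> 0 <= b ->
  (forall t, 0 <= a - 2 * t * N + t ^+ 2 * N * b) -> N <= a * b.
Proof.
move=> N0 b0 H.
have [Ne|Nlt] := eqVneq N 0.
  have := H 0; rewrite Ne; nra.
have Np : 0 < N by rewrite lt_def Nlt N0.
have [be|bn] := eqVneq b 0.
  have := H ((a + 1) / (2 * N)); rewrite be mulr0 addr0.
  have -> : 2 * ((a + 1) / (2 * N)) * N = a + 1 by field; rewrite -?lt0r_neq0 ?gt_eqF //; nra.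
  lra.
have bp : 0 < b by rewrite lt_def bn b0.
have := H (b^-1).
have -> : a - 2 * b^-1 * N + b^-1 ^+ 2 * N * b = (a * b - N) / b by field; rewrite gt_eqF.
by rewrite pmulr_lge0 ?invr_gt0 // subr_ge0.
Qed.

Local Open Scope complex_scope.
Lemma cs_cplx (R : realType) (a b z : R[i]) : 0 <= a -> 0 <= b ->
  (forall l, 0 <= a - l * z - Num.conj l * Num.conj z + Num.conj l * l * b) -> `|z| ^+ 2 <= a * b.
Proof.
rewrite normCK.
case: a => a1 a2; case: b => b1 b2; case: z => x y.
rewrite !lecE /= => /andP[/eqP -> a0] /andP[/eqP -> b0] H.
have := @cs_real _ a1 _ (x ^+ 2 + y ^+ 2) _ b0.
move=> T.
apply/andP; split; first by apply/eqP; ring.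
have : x ^+ 2 + y ^+ 2 <= a1 * b1.
  apply: T; first by nra.
  move=> t; have := H ((t * x) +i* (- (t * y))).
  rewrite lecE /= => /andP[_ h]; lra.
lra.
Qed.

Local Close Scope complex_scope.
Section Mx.
Variable C : numClosedFieldType.

Lemma adjmxM m n p (M : 'M[C]_(m,n)) (N : 'M_(n,p)) :
  adjmx (M *m N) = adjmx N *m adjmx M.
Proof. by rewrite /adjmx map_mxM trmx_mul. Qed.

Lemma adjmxK m n (M : 'M[C]_(m,n)) : adjmx (adjmx M) = M.
Proof. by apply/matrixP => i j; rewrite !mxE conjCK. Qed.

Lemma adjmxB m n (M N : 'M[C]_(m,n)) : adjmx (M - N) = adjmx M - adjmx N.
Proof. by apply/matrixP => i j; rewrite !mxE rmorphB. Qed.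

Lemma adjmxZ m n a (M : 'M[C]_(m,n)) : adjmx (a *: M) = a^* *: adjmx M.
Proof. by apply/matrixP => i j; rewrite !mxE rmorphM. Qed.

Lemma adjmx1 n : adjmx (1%:M : 'M[C]_n) = 1%:M.
Proof. by apply/matrixP => i j; rewrite !mxE rmorph_nat eq_sym. Qed.

Lemma tr_adj n (M : 'M[C]_n) : \tr (adjmx M) = (\tr M)^*.
Proof. by rewrite /adjmx mxtrace_tr trace_map_mx. Qed.

Lemma entry_rc m n p (P : 'M[C]_(m,n)) (Q : 'M[C]_(n,p)) i j :
  (P *m Q) i j = (row i P *m col j Q) 0 0.
Proof. by rewrite !mxE; apply: eq_bigr => k _; rewrite !mxE. Qed.

Lemma row_adj m n (Y : 'M[C]_(m,n)) i : row i (adjmx Y) = adjmx (col i Y).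
Proof. by rewrite /adjmx -tr_col map_col. Qed.

Definition tf n m (rho : 'M[C]_n) (Y Z : 'M[C]_(n,m)) := \tr (adjmx Y *m rho *m Z).
Arguments tf {n m}.

Lemma tf_ge0 n m (rho : 'M[C]_n) (Y : 'M[C]_(n,m)) : psd rho -> 0 <= tf rho Y Y.
Proof.
move=> [_ Hp]; rewrite /tf /mxtrace; apply: sumr_ge0 => i _.
by rewrite entry_rc row_mul row_adj; apply: Hp.
Qed.

Lemma tf_conj n m (rho : 'M[C]_n) (Y Z : 'M[C]_(n,m)) : is_hermitian rho ->
  (tf rho Y Z)^* = tf rho Z Y.
Proof. by move=> Hr; rewrite /tf -tr_adj !adjmxM adjmxK Hr mulmxA. Qed.

Lemma tf_expand n m (rho : 'M[C]_n) (Y Z : 'M[C]_(n,m)) l :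
  tf rho (Y - l *: Z) (Y - l *: Z) =
  tf rho Y Y - l * tf rho Y Z - l^* * tf rho Z Y + l^* * l * tf rho Z Z.
Proof.
rewrite /tf adjmxB adjmxZ !mulmxBl !mulmxBr -!scalemxAl -!scalemxAr.
rewrite !raddfB /= !mxtraceZ.
ring.
Qed.

End Mx.
Arguments tf {C n m}.

Lemma tf_cs (R : realType) n m (rho : 'M[R[i]]_n) (Y Z : 'M[R[i]]_(n,m)) : psd rho ->
  `|tf rho Y Z| ^+ 2 <= tf rho Y Y * tf rho Z Z.
Proof.
move=> Hp; apply: cs_cplx; try exact: tf_ge0.
move=> l; rewrite tf_conj; last exact: Hp.1.
rewrite -tf_expand; exact: tf_ge0.
Qed.

Lemma tr3 (C : numClosedFieldType) n (X Y Z : 'M[C]_n) :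
  \tr (X *m (Y *m Z)) = \tr (Z *m X *m Y).
Proof. by rewrite (mxtrace_mulC X) -[in LHS]mulmxA (mxtrace_mulC Y). Qed.

Lemma tr11 (C : numClosedFieldType) (M : 'M[C]_1) : \tr M = M 0 0.
Proof. by rewrite /mxtrace big_ord1. Qed.

Lemma braket_conj (C : numClosedFieldType) n (u v : 'cV[C]_n) M :
  (braket u M v)^* = braket v (adjmx M) u.
Proof.
have E : forall N : 'M[C]_1, (N 0 0)^* = (adjmx N) 0 0 by move=> N; rewrite !mxE.
by rewrite /braket E !adjmxM adjmxK mulmxA.
Qed.

Local Open Scope complex_scope.

Theorem mainTheorem8 (R : realType) (n : nat) (A B rho : 'M[R[i]]_n) (phi : 'cV[R[i]]_n) :
  is_hermitian A -> is_hermitian B -> density rho -> unit_vector phi ->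
  let W := braket phi (B *m rho *m A) phi in
  let c := (2%:R * 'i)^-1 * \tr (rho *m commmx A B) - 'Im W in
  let d := 2%:R^-1 * \tr (rho *m acommmx A B) - 'Re W in
  [/\ var_phi A rho phi * var_phi B rho phi >= c ^+ 2 + d ^+ 2,
      var_phi A rho phi * var_phi B rho phi >= c ^+ 2 &
      (0 < braket phi rho phi ->
         var_w A rho phi * var_w B rho phi >= c ^+ 2)].
Proof.
move=> HA HB [Hp _] Hphi W c d.
have Hr := Hp.1.
pose P := phi *m adjmx phi.
pose Q := 1%:M - P.
have pp : adjmx phi *m phi = 1%:M.
  rewrite (mx11_scalar (adjmx phi *m phi)); move: Hphi.
  by rewrite /unit_vector /braket mulmx1 => ->.
have aQ : adjmx Q = Q by rewrite /Q adjmxB adjmx1 /P adjmxM adjmxK.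
have PP : P *m P = P by rewrite /P mulmxA -(mulmxA phi) pp mulmx1.
have QQ : Q *m Q = Q.
  by rewrite /Q mulmxBl mul1mx mulmxBr mulmx1 PP subrr subr0.
have tQ : forall X Y, tf rho (X *m Q) (Y *m Q) =
    \tr (adjmx X *m rho *m Y) - braket phi (adjmx X *m rho *m Y) phi.
  move=> X Y; rewrite /tf adjmxM aQ.
  have -> : Q *m adjmx X *m rho *m (Y *m Q) = Q *m ((adjmx X *m rho *m Y) *m Q).
    by rewrite !mulmxA.
  rewrite mxtrace_mulC -(mulmxA (adjmx X *m rho *m Y)) QQ /Q mulmxBr mulmx1 raddfB /=.
  by rewrite /P mulmxA (mxtrace_mulC _ (adjmx phi)) tr11 /braket !mulmxA.
have varE : forall X, is_hermitian X -> var_phi X rho phi = tf rho (X *m Q) (X *m Q).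
  move=> X HX; rewrite tQ HX /var_phi; congr (_ - _).
  by rewrite -mulmxA mxtrace_mulC.
have var0 : forall X, is_hermitian X -> 0 <= var_phi X rho phi.
  by move=> X HX; rewrite varE //; apply: tf_ge0.
set z := tf rho (A *m Q) (B *m Q).
set x := \tr (A *m rho *m B).
have zE : z = x - Num.conj W.
  by rewrite /z tQ HA /W braket_conj !adjmxM HA HB Hr !mulmxA.
have xc : Num.conj x = \tr (B *m rho *m A) by rewrite -tr_adj !adjmxM HA HB Hr mulmxA.
have t1 : \tr (rho *m (A *m B)) = Num.conj x by rewrite xc tr3.
have t2 : \tr (rho *m (B *m A)) = x by rewrite tr3.
have cB : forall u v : R[i], Num.conj (u - v) = Num.conj u - Num.conj v.
  by move=> u v; rewrite rmorphB.
have dE : d = 'Re z.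
  rewrite /d /acommmx mulmxDr mxtraceD t1 t2 zE !ReE cB conjCK; ring.
have cE : c = - 'Im z.
  rewrite /c /commmx mulmxBr raddfB /= t1 t2 zE !ImE cB conjCK invfM.
  rewrite invCi; ring.
have cd : c ^+ 2 + d ^+ 2 = `|z| ^+ 2 by rewrite cE dE sqrrN addrC normC2_Re_Im.
have d0 : 0 <= d ^+ 2 by rewrite -real_normK ?exprn_ge0 // dE Creal_Re.
have P1 : c ^+ 2 + d ^+ 2 <= var_phi A rho phi * var_phi B rho phi.
  by rewrite cd !varE //; apply: tf_cs.
have P2 : c ^+ 2 <= var_phi A rho phi * var_phi B rho phi.
  by apply: le_trans P1; rewrite lerDl.
split=> // p0.
have vw : forall X, is_hermitian X -> var_phi X rho phi <= var_w X rho phi.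
  move=> X HX; rewrite /var_phi /var_w lerD2l lerN2 ler_pdivrMr //.
  have := @tf_cs R n 1 rho (X *m phi) phi Hp.
  have e1 : tf rho (X *m phi) phi = braket phi (X *m rho) phi.
    by rewrite /tf tr11 adjmxM HX /braket !mulmxA.
  have e2 : tf rho (X *m phi) (X *m phi) = braket phi (X *m rho *m X) phi.
    by rewrite /tf tr11 adjmxM HX /braket !mulmxA.
  have e3 : tf rho phi phi = braket phi rho phi.
    by rewrite /tf tr11 /braket.
  by rewrite e1 e2 e3.
apply: le_trans P2 _; apply: ler_pM; try apply: var0; try apply: vw; done.
Qed.
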